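(* There exist a finite atom set $\Phi$, a finite agent set $I$, a logic $\Lambda$, an $\boldsymbol{\mathcal{L}}_\Lambda$ modal space $\boldsymbol{X}$ and a clean map $\boldsymbol{f}$ on $\boldsymbol{X}$ induced by a finite, static multi-pointed action model that is not Boolean, such that $\boldsymbol{f}$ exhibits nontrivial recurrence (with respect to the Stone topology): there is $\boldsymbol{x}\in\boldsymbol{X}$ whose orbit $\mathcal{O}_{\boldsymbol{f}}(\boldsymbol{x})$ is not periodic and contains a recurrent point.
   Context: Setting: atom set $\Phi$, finite agent set $I$, modal language $\mathcal{L}$ ($\varphi::=\top\mid p\mid\neg\varphi\mid\varphi\wedge\varphi\mid\square_i\varphi$), logic $\Lambda$ a normal modal logic extending $K$, $\boldsymbol{\mathcal{L}}_\Lambda$ the set of $\Lambda$-equivalence classes of formulas. For a set $X$ of pointed Kripke models (countable nonempty state sets, standard semantics), the modal space is $\boldsymbol{X}=\{\boldsymbol{x}:x\in X\}$, $\boldsymbol{x}=\{y\in X:y,x\text{ satisfy the same formulas}\}$, with the Stone topology generated by the sets $\{\boldsymbol{x}:x\vDash\varphi\}$. Clean map: induced via product update $x\mapsto x\otimes\Sigma\Gamma$ by a multi-pointed action model $\Sigma\Gamma=(\llbracket\Sigma\rrbracket,\mathsf{R},pre,post,\Gamma)$ (countable action set, relations $\mathsf{R}_i$, preconditions in $\mathcal{L}$, postconditions $\top$ or conjunctions of literals over $\Phi$, designated set $\emptyset\ne\Gamma\subseteq\llbracket\Sigma\rrbracket$) that is precondition finite, exhaustive, deterministic and closing over $X$ (every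 $x\in X$ satisfies $pre(\sigma)$ for exactly one $\sigma\in\Gamma$, finitely many preconditions up to equivalence, and $x\otimes\Sigma\Gamma\in X$). Product update: states $(s,\sigma)$ with $Ms\vDash pre(\sigma)$, relations componentwise, $p$ true at $(s,\sigma)$ iff $post(\sigma)\vDash p$, or $s\in\llbracket p\rrbracket$ and $post(\sigma)\nvDash\neg p$; designated state $(s,\sigma)$ for the applicable $\sigma\in\Gamma$. $\boldsymbol{f}(\boldsymbol{x})$ is the class of $x\otimes\Sigma\Gamma$. $\Sigma\Gamma$ is finite if $\llbracket\Sigma\rrbracket$ is finite, Boolean if every precondition is a Boolean (modality-free) formula, static if every postcondition is $\top$. Orbit: $\mathcal{O}_{\boldsymbol{f}}(\boldsymbol{x})=\{\boldsymbol{f}^n(\boldsymbol{x}):n\in\mathbb{N}_0\}$; it is periodic if $\boldsymbol{f}^{n+k}(\boldsymbol{x})=\boldsymbol{f}^n(\boldsymbol{x})$ for some $n\ge0,k>0$. The limit set $\omega_{\boldsymbol{f}}(\boldsymbol{y})$ is the set of limits of convergent subsequences $\boldsymbol{f}^{n_1}(\boldsymbol{y}),\boldsymbol{f}^{n_2}(\boldsymbol{y}),\dots$ ($n_1<n_2<\cdots$); $\boldsymbol{y}$ is recurrent if $\boldsymbol{y}\in\omega_{\boldsymbol{f}}(\boldsymbol{y})$. *)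

(* Defs.v *)
From mathcomp Require Import all_boot.
Unset Printing Implicit Defensive.

Section Modal.
Variables (Phi I : finType).

Inductive form : Type :=
| FTop : form
| FAtom : Phi -> form
| FNeg : form -> form
| FAnd : form -> form -> form
| FBox : I -> form -> form.

Definition FImp (a b : form) : form := FNeg (FAnd a (FNeg b)).
Definition FIff (a b : form) : form := FAnd (FImp a b) (FImp b a).

Fixpoint boolean_form (a : form) : bool :=
  match a with
  | FTop | FAtom _ => true
  | FNeg b => boolean_form b
  | FAnd b c => boolean_form b && boolean_form c
  | FBox _ _ => false
  end.

Fixpoint subst (s : Phi -> form) (a : form) : form :=
  match a with
  | FTop => FTop
  | FAtom p => s p
  | FNeg b => FNeg (subst s b)
  | FAnd b c => FAnd (subst s b) (subst s c)
  | FBox i b => FBox i (subst s b)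
  end.

Record kmodel := KModel {
  st : Type;
  rel : I -> st -> st -> Prop;
  val : Phi -> st -> Prop }.




Record pmodel := PModel { mdl : kmodel; pt : st mdl }.

Definition countable_type (T : Type) : Prop := exists f : T -> nat, injective f.

Fixpoint sat (M : kmodel) (s : st M) (a : form) : Prop :=
  match a with
  | FTop => True
  | FAtom p => val M p s
  | FNeg b => ~ sat M s b
  | FAnd b c => sat M s b /\ sat M s c
  | FBox i b => forall t, rel M i s t -> sat M t b
  end.

Definition psat (x : pmodel) (a : form) : Prop := sat (mdl x) (pt x) a.

(** modal equivalence = same class in the modal space *)
Definition meq (x y : pmodel) : Prop := forall a, psat x a <-> psat y a.

(** Normal modal logics extending K.  K is taken semantically as the set of
    formulas valid on all Kripke models (equal to axiomatic K by completeness). *)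
Definition K_valid (a : form) : Prop := forall (M : kmodel) (s : st M), sat M s a.

Definition normal_logic (L : form -> Prop) : Prop :=
  [/\ (forall a, K_valid a -> L a),
      (forall a b, L (FImp a b) -> L a -> L b),
      (forall i a, L a -> L (FBox i a)) &
      (forall s a, L a -> L (subst s a))].

Definition modal_space (L : form -> Prop) (X : pmodel -> Prop) : Prop :=
  forall x, X x -> countable_type (st (mdl x)) /\ (forall a, L a -> psat x a).

(** Multi-pointed action models.  A postcondition is a list of literals
    (b, p) meaning p (b = true) or ~p (b = false); the empty list is T. *)
Record amodel := AModel {
  act : Type;
  arel : I -> act -> act -> Prop;
  pre : act -> form;
  post : act -> seq (bool * Phi);
  des : act -> Prop }.

Definition post_entails (l : seq (bool * Phi)) (b : bool) (p : Phi) : Prop :=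
  forall v : Phi -> bool, (forall lit, lit \in l -> v lit.2 = lit.1) -> v p = b.

Definition upd_model (M : kmodel) (A : amodel) : kmodel :=
  @KModel {sa : st M * act A | sat M sa.1 (pre A sa.2)}
    (fun i u w => rel M i (sval u).1 (sval w).1 /\ arel A i (sval u).2 (sval w).2)
    (fun p u => post_entails (post A (sval u).2) true p \/
                (val M p (sval u).1 /\ ~ post_entails (post A (sval u).2) false p)).

Definition product_update (x : pmodel) (A : amodel) (sg : act A)
  (H : psat x (pre A sg)) : pmodel :=
  @PModel (upd_model (mdl x) A) (exist _ (pt x, sg) H).

Definition amodel_finite (A : amodel) : Prop :=
  exists (n : nat) (e : 'I_n -> act A), forall a, exists i, e i = a.

Definition amodel_boolean (A : amodel) : Prop :=
  forall a : act A, boolean_form (pre A a).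

Definition amodel_static (A : amodel) : Prop :=
  forall a : act A, post A a = [::].

Definition precondition_finite (L : form -> Prop) (A : amodel) : Prop :=
  exists (n : nat) (e : 'I_n -> form), forall a : act A, exists i, L (FIff (pre A a) (e i)).

Definition exhaustive_deterministic (X : pmodel -> Prop) (A : amodel) : Prop :=
  forall x, X x -> exists sg, [/\ des A sg, psat x (pre A sg) &
                   forall sg', des A sg' -> psat x (pre A sg') -> sg' = sg].

Definition closing (X : pmodel -> Prop) (A : amodel) : Prop :=
  forall x (sg : act A) (H : psat x (pre A sg)), X x -> des A sg ->
    X (product_update x A sg H).

Definition clean_action_model (L : form -> Prop) (X : pmodel -> Prop) (A : amodel) : Prop :=
  [/\ countable_type (act A), (exists a, des A a),
      precondition_finite L A, exhaustive_deterministic X A & closing X A].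

(** xs is a sequence of representatives of the orbit f^n(x):
    xs 0 = x and xs (n+1) = xs n (x) Sigma Gamma. *)
Definition orbit_seq (A : amodel) (x : pmodel) (xs : nat -> pmodel) : Prop :=
  xs 0 = x /\
  forall n, exists (sg : act A) (H : psat (xs n) (pre A sg)),
    des A sg /\ xs n.+1 = product_update (xs n) A sg H.

(** Convergence in the Stone topology (generated by the sets [phi]) *)
Definition converges (ys : nat -> pmodel) (y : pmodel) : Prop :=
  forall a, psat y a -> exists K, forall k, K <= k -> psat (ys k) a.

Definition recurrent_seq (zs : nat -> pmodel) : Prop :=
  exists nk : nat -> nat, (forall k, nk k < nk k.+1) /\
    converges (fun k => zs (nk k)) (zs 0).

Definition periodic_seq (xs : nat -> pmodel) : Prop :=
  exists n k, 0 < k /\ meq (xs (n + k)) (xs n).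

End Modal.

Arguments FTop {Phi I}. Arguments FAtom {Phi I}. Arguments FNeg {Phi I}.
Arguments FAnd {Phi I}. Arguments FBox {Phi I}.
Arguments FImp {Phi I}. Arguments FIff {Phi I}. Arguments boolean_form {Phi I}.
Arguments subst {Phi I}. Arguments st {Phi I}. Arguments rel {Phi I}. Arguments val {Phi I}.
Arguments mdl {Phi I}. Arguments pt {Phi I}. Arguments sat {Phi I}. Arguments psat {Phi I}.
Arguments meq {Phi I}. Arguments K_valid {Phi I}. Arguments normal_logic {Phi I}.
Arguments modal_space {Phi I}. Arguments act {Phi I}. Arguments arel {Phi I}.
Arguments pre {Phi I}. Arguments post {Phi I}. Arguments des {Phi I}.
Arguments post_entails {Phi}. Arguments upd_model {Phi I}. Arguments product_update {Phi I}.
Arguments amodel_finite {Phi I}. Arguments amodel_boolean {Phi I}. Arguments amodel_static {Phi I}.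
Arguments precondition_finite {Phi I}. Arguments exhaustive_deterministic {Phi I}.
Arguments closing {Phi I}. Arguments clean_action_model {Phi I}. Arguments orbit_seq {Phi I}.
Arguments converges {Phi I}. Arguments recurrent_seq {Phi I}. Arguments periodic_seq {Phi I}.

(* Main.v *)
Require Import Defs.
From mathcomp Require Import all_boot.
From mathcomp Require Import zify.
From Stdlib Require Import Classical ClassicalEpsilon ProofIrrelevance.
Definition P (j : nat) : bool := ~~ odd (logn 2 j.+1).

Lemma v2E o a : odd o -> logn 2 (o * 2 ^ a) = a.
Proof.
move=> oo. have o0 : 0 < o by case: o oo.
rewrite lognM ?expn_gt0 // lognX (logn_prime 2 (isT : prime 2)) eqxx muln1.
by rewrite logn_coprime ?coprime2n.
Qed.

Lemma Punb N : exists j, N <= j /\ P j.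
Proof.
exists N.*2; split; first by rewrite -addnn leq_addr.
have : odd (N.*2).+1 by rewrite /= odd_double.
move=> h; rewrite /P -[(N.*2).+1]muln1 -(expn0 2) v2E //.
Qed.

Lemma Pshift K r : r.+1 < 2 ^ K -> P (r + 2 ^ K) = P r.
Proof.
move=> hr.
have [o co ho] := pfactor_coprime (isT : prime 2) (ltn0Sn r).
set a := logn 2 r.+1 in ho.
have oo : odd o by rewrite -coprime2n.
have haK : a < K.
  have o0 : 0 < o by case: o oo {co ho}.
  rewrite -(ltn_exp2l _ _ (isT : 1 < 2)); apply: leq_ltn_trans hr.
  by rewrite ho leq_pmull.
have e : (r + 2 ^ K).+1 = (o + 2 ^ (K - a)) * 2 ^ a.
  rewrite mulnDl -ho -expnD subnK; last exact: ltnW.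
  by rewrite addSn.
rewrite /P e v2E; last   by rewrite oddD oo oddX /= orbF subn_eq0 -ltnNge haK.
by [].
Qed.

Lemma Pnonper n k : 0 < k -> exists j, n <= j /\ P (j + k) != P j.
Proof.
move=> k0.
have [c cc hk] := pfactor_coprime (isT : prime 2) k0.
set b := logn 2 k in hk.
have oc : odd c by rewrite -coprime2n.
have c0 : 0 < c by case: c oc {cc hk}.
have p0 : 0 < (c + 4 * n) * 2 ^ b by rewrite muln_gt0 expn_gt0 addn_gt0 c0.
exists ((c + 4 * n) * 2 ^ b).-1; split.
  have h2 : 0 < 2 ^ b by rewrite expn_gt0.
  rewrite -ltnS prednK //; apply: leq_trans (leq_pmulr (c + 4 * n) h2).
  lia.
rewrite /P -addSn prednK //.
have e : (c + 4 * n) * 2 ^ b + k = (c + 2 * n) * 2 ^ b.+1.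
  rewrite hk expnS; lia.
rewrite e !v2E //; try by rewrite oddD oc oddM.
by rewrite /= negbK; case: (odd b).
Qed.


Notation Ph := 'I_0.
Notation Ag := 'I_1.
Notation frm := (form Ph Ag).

Section Bis.
Variables (M N : kmodel Ph Ag) (Z : st M -> st N -> Prop).
Definition Bis : Prop :=
  (forall i s t s', Z s t -> Defs.rel M i s s' -> exists t', Defs.rel N i t t' /\ Z s' t') /\
  (forall i s t t', Z s t -> Defs.rel N i t t' -> exists s', Defs.rel M i s s' /\ Z s' t').

Lemma bis_sat : Bis -> forall (a : frm) s t, Z s t -> (sat M s a <-> sat N t a).
Proof.
move=> [hf hb]; elim=> [|p|b IH|b IHb c IHc|i b IH] s t hz /=.
- by [].
- by case: p.
- by rewrite (IH s t hz).
- by rewrite (IHb s t hz) (IHc s t hz).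
- split=> H u hu.
  + have [s' [h1 h2]] := hb _ _ _ _ hz hu. by rewrite -(IH _ _ h2); apply: H.
  + have [t' [h1 h2]] := hf _ _ _ _ hz hu. by rewrite (IH _ _ h2); apply: H.
Qed.
End Bis.
Arguments Bis {M N}.
Arguments bis_sat {M N Z}.

Definition Urel (s t : nat + nat) : Prop :=
  match s, t with
  | inl n, inr r => P (r + n)
  | inr k, inr l => k = l.+1
  | _, _ => False
  end.

Definition U : kmodel Ph Ag := @KModel Ph Ag (nat + nat)%type (fun _ => Urel) (fun _ _ => False).

Definition i0 : Ag := ord0.
Definition preA : frm := FNeg (FBox i0 (FNeg FTop)).

Definition g (s : nat + nat) : nat + nat :=
  match s with inl n => inl n.+1 | inr k => inr k.-1 end.

Lemma pre_inr r : sat U (inr r) preA -> 0 < r.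
Proof.
case: r => // /= H; exfalso; apply: H => -[n|l] //=.
Qed.

Lemma pre_inr' r : sat U (inr r.+1) preA.
Proof. by move=> /= H; apply: (H (inr r)). Qed.

Lemma forthU s t : Urel s t -> sat U t preA -> Urel (g s) (g t).
Proof.
case: s => [n|k]; case: t => [m|l] //= h /pre_inr hl.
- by rewrite -addSnnS prednK.
- by rewrite h prednK.
Qed.

Lemma backU s t : Urel (g s) t -> exists t', [/\ Urel s t', g t' = t & sat U t' preA].
Proof.
case: s => [n|k]; case: t => [m|l] //= h.
- exists (inr l.+1); split => //; last exact: pre_inr'. by rewrite addSnnS.
- exists (inr l.+1); split => //; last exact: pre_inr'. by case: k h => //= k ->.
Qed.

Definition Aact : amodel Ph Ag :=
  @AModel Ph Ag unit (fun _ _ _ => True) (fun _ => preA) (fun _ => [::]) (fun _ => True).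

Lemma bis_step (M : kmodel Ph Ag) (Z : st M -> st U -> Prop) :
  Bis Z -> Bis (fun (u : st (upd_model M Aact)) (t : st U) => exists s', Z (sval u).1 s' /\ t = g s').
Proof.
move=> hB; have hs := bis_sat hB; case: hB => [hf hb]; split.
- move=> i [[s x] hsx] t [[w y] hwy] [s' [/= hz ->]] [/= hr _].
  have [t' [h1 h2]] := hf _ _ _ _ hz hr.
  exists (g t'); split; last by exists t'.
  apply: forthU => //. by rewrite -(hs _ _ _ h2).
- move=> i [[s x] hsx] t t' [s' [/= hz ->]] hr.
  have [t'' [h1 h2 h3]] := backU _ _ hr.
  have [w [hw1 hw2]] := hb i _ _ _ hz h1.
  have hw : sat M w preA by rewrite (hs _ _ _ hw2).
  exists (exist _ (w, tt) hw); split => //. by exists t''.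
Qed.

Fixpoint depth (a : frm) : nat :=
  match a with
  | FTop | FAtom _ => 0
  | FNeg b => depth b
  | FAnd b c => maxn (depth b) (depth c)
  | FBox _ b => (depth b).+1
  end.

Lemma chainU (a : frm) k l : k = l \/ (depth a <= k /\ depth a <= l) ->
  (sat U (inr k) a <-> sat U (inr l) a).
Proof.
move=> [-> //|].
elim: a k l => [|p|b IH|b IHb c IHc|i b IH] k l /= [hk hl].
- by [].
- by case: p.
- by rewrite (IH k l).
- rewrite geq_max in hk; rewrite geq_max in hl.
  case/andP: hk => hk1 hk2; case/andP: hl => hl1 hl2.
  by rewrite (IHb k l) ?(IHc k l).
- case: k hk => // k hk; case: l hl => // l hl.
  have e : sat U (inr k) b <-> sat U (inr l) b by apply: IH.
  split=> H [m|m] //= [<-].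
  + by apply/e; apply: H.
  + by apply/e; apply: H.
Qed.

Lemma rootU (a : frm) n m : (forall r, r < depth a -> P (r + n) = P (r + m)) ->
  (sat U (inl n) a <-> sat U (inl m) a).
Proof.
elim: a => [|p|b IH|b IHb c IHc|i b _] /= h.
- by [].
- by case: p.
- by rewrite IH.
- rewrite IHb ?IHc // => r hr; apply: h; apply: leq_trans hr _;
   by rewrite ?leq_maxl ?leq_maxr.
- have side : forall n m, (forall r, r < (depth b).+1 -> P (r + n) = P (r + m)) ->
     (forall t, Urel (inl n) t -> sat U t b) -> (forall t, Urel (inl m) t -> sat U t b).
    move=> n' m' h' H [x|r] //= hr.
    case: (ltnP r (depth b).+1) => hrd.
      by apply: (H (inr r)); rewrite /= h'.
    have [j [hj pj]] := Punb (depth b + n').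
    have hjn : n' <= j by apply: leq_trans hj; apply: leq_addl.
    have := H (inr (j - n')); rewrite /= subnK // => /(_ pj) hs.
    apply: (proj2 (chainU b r (j - n') _)) => //; right; split; last first.
      by rewrite leq_subRL // addnC.
    exact: ltnW.
  split; first exact: side.
  by apply: side => r hr; rewrite h.
Qed.

Definition dia (b : frm) : frm := FNeg (FBox i0 (FNeg b)).
Fixpoint E (r : nat) : frm :=
  match r with 0 => FBox i0 (FNeg FTop) | r'.+1 => dia (E r') end.

Lemma Einr r k : sat U (inr k) (E r) <-> k = r.
Proof.
elim: r k => [|r IH] k /=.
- split; last by move=> e; subst k; case.
  case: k => // k H; exfalso; exact: (H (inr k)).
- split.
  + move=> H; apply: NNPP => ne; apply: H => -[m|m] //= e /IH em; apply: ne; by rewrite e em.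
  + move=> -> H; apply: (H (inr r)) => //; exact/IH.
Qed.

Lemma dia_inl r n : sat U (inl n) (dia (E r)) <-> P (r + n).
Proof.
rewrite /=; split.
- move=> H; apply: NNPP => ne; apply: H => -[m|m] //= hp /Einr e.
  by subst m; apply: ne.
- by move=> hp H; apply: (H (inr r)) => //; apply/Einr.
Qed.

Lemma pre_inl n : sat U (inl n) preA.
Proof.
have [j [hj pj]] := Punb n.
move=> /= H; apply: (H (inr (j - n))) => //=; by rewrite subnK.
Qed.

Definition step (y : pmodel Ph Ag) : pmodel Ph Ag :=
  match excluded_middle_informative (psat y preA) with
  | left H => product_update y Aact tt H
  | right _ => y
  end.
Definition x0 : pmodel Ph Ag := @PModel Ph Ag U (inl 0).
Definition xs n := iter n step x0.

Lemma xs_bis n : exists Z : st (mdl (xs n)) -> st U -> Prop, Bis Z /\ Z (pt (xs n)) (inl n).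
Proof.
elim: n => [|n [Z [hB hz]]].
  exists eq; split => //; split=> i s t s' -> h; by exists s'.
have hp : psat (xs n) preA by rewrite /psat (bis_sat hB _ _ _ hz); exact: pre_inl.
change (xs n.+1) with (step (xs n)); rewrite /step.
case: excluded_middle_informative => [H|//].
exists (fun (u : st (upd_model (mdl (xs n)) Aact)) (t : st U) => exists s', Z (sval u).1 s' /\ t = g s').
split; first exact: (bis_step _ _ hB).
by exists (inl n).
Qed.

Lemma xs_sat n a : psat (xs n) a <-> sat U (inl n) a.
Proof. have [Z [hB hz]] := xs_bis n; exact: bis_sat hB _ _ _ hz. Qed.

Lemma xs_pre n : psat (xs n) preA.
Proof. apply/xs_sat; exact: pre_inl. Qed.

Lemma count_upd (M : kmodel Ph Ag) : countable_type (st M) -> countable_type (st (upd_model M Aact)).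
Proof.
move=> [f hf]; exists (fun u => f (sval u).1).
move=> [[s x] hs] [[t y] ht] /= /hf e; subst t; case: x hs => hs; case: y ht => ht.
by rewrite (proof_irrelevance _ hs ht).
Qed.

Lemma subst_sat (M : kmodel Ph Ag) sg (a : frm) s :
  sat M s (subst sg a) <-> sat (@KModel Ph Ag (st M) (Defs.rel M) (fun p t => sat M t (sg p))) s a.
Proof.
elim: a s => [|p|b IH|b IHb c IHc|i b IH] s //=.
- by rewrite IH.
- by rewrite IHb IHc.
- by split=> H t ht; apply/IH; apply: H.
Qed.

Lemma normalK : normal_logic (@K_valid Ph Ag).
Proof.
split.
- by [].
- move=> a b hab ha M s; have := hab M s; have := ha M s => /= h1 h2.
  by apply: NNPP => h3; apply: h2.
- by move=> i a ha M s t _; apply: ha.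
- move=> sg a ha M s; apply/subst_sat; exact: ha.
Qed.

Definition Xs (y : pmodel Ph Ag) : Prop :=
  countable_type (st (mdl y)) /\
  exists n (Z : st (mdl y) -> st U -> Prop), Bis Z /\ Z (pt y) (inl n).

Theorem proposition10 :
  exists (Phi I : finType) (L : form Phi I -> Prop) (X : pmodel Phi I -> Prop)
         (A : amodel Phi I),
    [/\ normal_logic L, modal_space L X, clean_action_model L X A &
        [/\ amodel_finite A, amodel_static A & ~ amodel_boolean A]] /\
    exists (x : pmodel Phi I) (xs : nat -> pmodel Phi I),
      [/\ X x, orbit_seq A x xs, ~ periodic_seq xs &
          exists m, recurrent_seq (fun n => xs (m + n))].
Proof.
exists Ph, Ag, (@K_valid Ph Ag), Xs, Aact; split; first split.
- exact: normalK.
- by move=> y [hc _]; split => // a ha; apply: ha.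
- split.
  + by exists (fun _ => 0) => -[] [].
  + by exists tt.
  + exists 1, (fun _ => preA) => a; exists ord0 => M s /=; tauto.
  + move=> y [_ [n [Z [hB hz]]]]; exists tt; split => //.
      by rewrite /psat (bis_sat hB _ _ _ hz); exact: pre_inl.
    by move=> [] _ _; case: tt.
  + move=> y [] H [hc [n [Z [hB hz]]]] _; split; first exact: count_upd.
    exists n.+1, (fun (u : st (upd_model (mdl y) Aact)) (t : st U) => exists s', Z (sval u).1 s' /\ t = g s').
    split; first exact: (bis_step _ _ hB).
    by exists (inl n).
- split.
  + by exists 1, (fun _ => tt) => -[]; exists ord0.
  + by [].
  + by move/(_ tt).
exists x0, xs; split.
- split.
    by exists pickle; apply: (pcan_inj (@pickleK _)).
  exists 0, eq; split => //; split=> i s t s' -> h; by exists s'.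
- split => // n; exists tt, (xs_pre n); split => //.
  change (xs n.+1) with (step (xs n)); rewrite /step.
  case: excluded_middle_informative => H; last by have := xs_pre n.
  by rewrite (proof_irrelevance _ H (xs_pre n)).
- move=> [n [k [k0 hm]]].
  have [j [hj hp]] := Pnonper n k k0.
  have := hm (dia (E (j - n))); rewrite !xs_sat !dia_inl.
  rewrite addnA subnK //.
  move: hp; case: (P (j + k)); case: (P j) => //= _ [h1 h2];
    first [by have := h1 isT | by have := h2 isT].
- exists 0, (fun k => 2 ^ k.+1); split.
    by move=> k; rewrite ltn_exp2l.
  move=> a /= ha; exists (depth a) => k hk.
  move: ha; rewrite !xs_sat => ha; apply/(rootU a (2 ^ k.+1) 0) => // r hr.
  rewrite addn0 Pshift //.
  have := ltn_expl k.+1 (isT : 1 < 2); lia.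
Qed.
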